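(* Let $\mathcal X,\mathcal Y$ be Polish spaces and $(\mu,\nu)\in\mathcal P(\mathcal X)\times\mathcal P(\mathcal Y)$. Let $\mathbf X$ be a one-time-step stochastic process $(X_1=X,X_2=Y)$ with filtration $(\mathcal F_t)_{t=1}^2$ on some probability space such that $X\sim\mu$ and $Y\sim\nu$. Then there exists $P^{\mathbf X}\in\Lambda(\mu,\nu)$ with \[ \mathbb E\big[F(X,\mathscr L(Y|\mathcal F_1))\big]=\int_{\mathcal X\times\mathcal P(\mathcal Y)}F(x,p)\,P^{\mathbf X}(dx,dp)\qquad(\ast) \] for all measurable $F:\mathcal X\times\mathcal P(\mathcal Y)\to\overline{\mathbb{R}}$ for which the left-hand side of $(\ast)$ is well-defined. Conversely, any $P\in\Lambda(\mu,\nu)$ induces such a process $\mathbf X$ with $X\sim\mu$ and $Y\sim\nu$ such that $(\ast)$ holds with $P^{\mathbf X}=P$ for any $F$ for which the right-hand side of $(\ast)$ is well-defined.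
   Context: $\overline{\mathbb{R}}=\mathbb{R}\cup\{\pm\infty\}$; $\mathscr L(Y|\mathcal F_1)$ is the conditional law (regular conditional distribution) of $Y$ given $\mathcal F_1$. $\mathcal P(\mathcal Y)$ carries the weak topology. The intensity map $\hat I:\mathcal P(\mathcal X\times\mathcal P(\mathcal Y))\to\mathcal P(\mathcal X\times\mathcal Y)$ is defined by $\hat I(P)(f)=\int\int f(x,y)\,p(dy)\,P(dx,dp)$ for bounded continuous $f$, and $\Lambda(\mu,\nu):=\{P\in\mathcal P(\mathcal X\times\mathcal P(\mathcal Y)):\hat I(P)\text{ has marginals }\mu,\nu\}$. *)

(* Defs.v *)
From HB Require Import structures.
From mathcomp Require Import all_boot all_order all_algebra.
From mathcomp Require Import all_classical all_reals all_analysis.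
From mathcomp Require Import measurable_realfun.

Set Implicit Arguments.
Unset Strict Implicit.
Unset Printing Implicit Defensive.

Import Order.TTheory GRing.Theory Num.Theory.
Local Open Scope classical_set_scope.
Local Open Scope ring_scope.

Section polish.
Context (R : realType) {d : measure_display} (T : measurableType d).

Definition dist_open (dist : T -> T -> R) (U : set T) : Prop :=
  forall x, U x -> exists2 e : R, 0 < e & [set y | dist x y < e] `<=` U.

Definition dist_cauchy (dist : T -> T -> R) (u : nat -> T) : Prop :=
  forall e : R, 0 < e -> exists N : nat,
    forall m n : nat, (N <= m)%N -> (N <= n)%N -> dist (u m) (u n) < e.

Definition dist_converges (dist : T -> T -> R) (u : nat -> T) (l : T) : Prop :=
  forall e : R, 0 < e -> exists N : nat,
    forall n : nat, (N <= n)%N -> dist (u n) l < e.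

Definition is_metric (dist : T -> T -> R) : Prop :=
  [/\ forall x y, 0 <= dist x y,
      forall x y, dist x y = 0 <-> x = y,
      forall x y, dist x y = dist y x &
      forall x y z, dist x z <= dist x y + dist y z].

Definition polish_borel : Prop :=
  exists dist : T -> T -> R,
    [/\ is_metric dist,
        forall u, dist_cauchy dist u -> exists l, dist_converges dist u l,
        exists s : nat -> T, forall x (e : R), 0 < e -> exists n, dist x (s n) < e &
        forall A : set T, measurable A <-> <<s dist_open dist >> A].
End polish.

Section prob_space.
Context {d : measure_display} (T : measurableType d) (R : realType).

Definition probs : Type := probability T R.

HB.instance Definition _ := gen_eqMixin probs.
HB.instance Definition _ := gen_choiceMixin probs.
HB.instance Definition _ :=
  isPointed.Build probs (@dirac _ T point R : probability T R).

Definition probs_measurable : set_system probs :=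
  <<s \bigcup_(A in measurable)
        preimage_set_system [set: probs] (fun p : probs => p A) measurable >>.

Let probs_measurable0 : probs_measurable set0.
Proof. exact: sigma_algebra0. Qed.
Let probs_measurableC (U : set probs) :
  probs_measurable U -> probs_measurable (~` U).
Proof. exact: sigma_algebraC. Qed.
Let probs_measurableU (F : (set probs)^nat) :
  (forall i, probs_measurable (F i)) -> probs_measurable (\bigcup_i F i).
Proof. exact: sigma_algebra_bigcup. Qed.

Definition probs_display : measure_display.
Proof. by constructor. Qed.

HB.instance Definition _ :=
  @isMeasurable.Build probs_display probs probs_measurable
    probs_measurable0 probs_measurableC probs_measurableU.
End prob_space.

Section processes.
Local Open Scope ereal_scope.
Context (R : realType) {dO : measure_display} (Omega : measurableType dO).

Definition F_measurable {dT} {T : measurableType dT} (F : set_system Omega)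
    (f : Omega -> T) : Prop :=
  forall B : set T, measurable B -> F (f @^-1` B).

Definition filtration2 (F1 F2 : set_system Omega) : Prop :=
  [/\ sigma_algebra [set: Omega] F1, sigma_algebra [set: Omega] F2,
      F1 `<=` F2 & F2 `<=` measurable].

Definition has_law {dT} {T : measurableType dT} (Pr : probability Omega R)
    (X : Omega -> T) (mu : probability T R) : Prop :=
  forall B : set T, measurable B -> Pr (X @^-1` B) = mu B.

(** [kappa] is (a version of) the regular conditional distribution
    L(Y | F1) of [Y] given [F1] under [Pr] *)
Definition cond_law {dY} {Y : measurableType dY} (Pr : probability Omega R)
    (F1 : set_system Omega) (Yv : Omega -> Y) (kappa : Omega -> probs Y R) : Prop :=
  F_measurable F1 kappa /\
  forall A : set Omega, F1 A -> forall B : set Y, measurable B ->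
    Pr (A `&` Yv @^-1` B) = \int[Pr]_(w in A) kappa w B.
End processes.

Definition integral_well_defined {d} {T : measurableType d} {R : realType}
    (m : {measure set T -> \bar R}) (f : T -> \bar R) : Prop :=
  ~ ((\int[m]_x (f^\+ x) = +oo)%E /\ (\int[m]_x (f^\- x) = +oo)%E).

Section intensity.
Local Open Scope ereal_scope.
Context (R : realType) {dX dY : measure_display}
  (X : measurableType dX) (Y : measurableType dY).

Definition intensity (P : probability (X * probs Y R)%type R)
    (C : set (X * Y)) : \bar R :=
  \int[P]_z \int[z.2]_y (\1_C (z.1, y))%:E.

Definition Lambda (mu : probability X R) (nu : probability Y R)
    (P : probability (X * probs Y R)%type R) : Prop :=
  (forall A : set X, measurable A -> intensity P (A `*` [set: Y]) = mu A) /\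
  (forall B : set Y, measurable B -> intensity P ([set: X] `*` B) = nu B).
End intensity.

(* Main.v *)
Require Import Defs.
From HB Require Import structures.
From mathcomp Require Import all_boot all_order all_algebra.
From mathcomp Require Import all_classical all_reals all_analysis.
From mathcomp Require Import measurable_realfun.
From mathcomp Require Import lra.
Set Implicit Arguments.
Unset Strict Implicit.
Unset Printing Implicit Defensive.
Import Order.TTheory GRing.Theory Num.Theory.
Local Open Scope classical_set_scope.
Local Open Scope ereal_scope.


Section aux.
Context (R : realType) {dX dY : measure_display}
  (X : measurableType dX) (Y : measurableType dY).

Lemma measurable_eval (B : set Y) : measurable B ->
  measurable_fun setT (fun p : probs Y R => p B).
Proof.
move=> mB _ D mD; apply: sub_sigma_algebra; exists B => //; exists D => //.
Qed.

Definition peq (p q : probs Y R) := forall B, measurable B -> p B = q B.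

Lemma sat_probs (S : set (probs Y R)) : measurable S ->
  forall p q, peq p q -> S p -> S q.
Proof.
pose C := [set S : set (probs Y R) | forall p q, peq p q -> (S p <-> S q)].
suff : measurable `<=` C.
  by move=> h mS p q pq Sp; case: (h _ mS p q pq) => + _; apply.
apply: smallest_sub.
  split.
  - by move=> p q _; split.
  - by move=> A CA p q pq /=; have := CA p q pq; rewrite /setD /=; tauto.
  - move=> A CA p q pq; split=> -[n _ An]; exists n => //; have := CA n p q pq; tauto.
move=> _ [B mB] [D mD <-] p q pq /=; rewrite (pq B mB); tauto.
Qed.

Lemma sat_prod (S : set (X * probs Y R)) : measurable S ->
  forall x p q, peq p q -> S (x, p) -> S (x, q).
Proof.
pose C := [set S : set (X * probs Y R) |
   forall x p q, peq p q -> (S (x, p) <-> S (x, q))].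
suff : measurable `<=` C.
  by move=> h mS x p q pq Sp; case: (h _ mS x p q pq) => + _; apply.
apply: smallest_sub.
  split.
  - by move=> x p q _; split.
  - by move=> A CA x p q pq /=; have := CA x p q pq; rewrite /setD /=; tauto.
  - move=> A CA x p q pq; split=> -[n _ An]; exists n => //; have := CA n x p q pq; tauto.
move=> S0 HS; case: HS => -[B mB <-] x p q pq /=.
  tauto.
have qp : peq q p by move=> B' mB'; rewrite pq.
split=> -[_ h]; split => //.
  exact: (sat_probs mB pq).
exact: (sat_probs mB qp).
Qed.

Lemma F_peq (F : X * probs Y R -> \bar R) : measurable_fun setT F ->
  forall x p q, peq p q -> F (x, p) = F (x, q).
Proof.
move=> mF x p q pq.
have mS := mF measurableT _ (emeasurable_set1 (F (x, p))).
have := sat_prod mS pq; rewrite /= => h.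
by have [_ ->] := h x (conj I erefl).
Qed.

End aux.

Section polish_gen.
Context (R : realType) {dY : measure_display} (Y : measurableType dY).
Variables (dist : Y -> Y -> R) (s : nat -> Y).

Definition ballD n k := [set y | (dist (s n) y < (k.+1%:R)^-1)%R].
Fixpoint GsD (l : seq (nat * nat)) : set Y :=
  if l is p :: l' then ballD p.1 p.2 `&` GsD l' else setT.

Lemma GsD_cat l1 l2 : GsD (l1 ++ l2) = GsD l1 `&` GsD l2.
Proof. by elim: l1 => [|a l IH] /=; [rewrite setTI | rewrite IH setIA]. Qed.
End polish_gen.

Lemma polish_gen (R : realType) {dY : measure_display} (Y : measurableType dY)
  (hY : polish_borel R Y) :
  exists G : nat -> set Y, (forall n, measurable (G n)) /\
    forall p q : probs Y R, (forall n, p (G n) = q (G n)) -> peq p q.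
Proof.
case: hY => dist [[d0 d_eq dsym dtri] _ [s ds] mE].
pose ball := ballD dist s.
pose Gs := GsD dist s.
have ball_open n k : dist_open dist (ball n k).
  move=> x; rewrite /ball /ballD /=; set r := (k.+1%:R^-1)%R => bx.
  exists (r - dist (s n) x)%R; first by rewrite subr_gt0.
  move=> y /= hy; have := dtri (s n) x y; lra.
have mball n k : measurable (ball n k).
  by apply/mE; apply: sub_sigma_algebra; exact: ball_open.
have mGs l : measurable (Gs l).
  by elim: l => [|[n k] l IH] //=; exact: measurableI.
exists (fun i => Gs (odflt [::] (unpickle i))); split => [i|p q hpq]; first exact: mGs.
have hG l : p (Gs l) = q (Gs l) by have := hpq (pickle l); rewrite pickleK.
have mG : measurable = <<s range Gs >>.
  apply/seteqP; split.
    move=> A /mE; apply: smallest_sub; first exact: smallest_sigma_algebra.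
    move=> U oU.
    have -> : U = \bigcup_n \bigcup_k [set y | ball n k y /\ ball n k `<=` U].
      apply/seteqP; split; last by move=> x [n _ [k _ [bx sub]]]; exact: sub.
      move=> x Ux; have [e e0 he] := oU x Ux.
      have [k hk] : exists k, (0 + k.+1%:R^-1 < e / 2)%R.
        by apply: ltr_add_invr; rewrite divr_gt0.
      rewrite add0r in hk.
      have [n hn] := ds x (k.+1%:R^-1)%R (ltac:(by rewrite invr_gt0)).
      exists n => //; exists k => //; split.
        by rewrite /ball /ballD /= dsym.
      move=> y hy; apply: he; rewrite /=; have := dtri x (s n) y.
      rewrite /ball /ballD /= in hy; move: hk hn hy.
      set r := (k.+1%:R^-1)%R; lra.
    apply: sigma_algebra_bigcup => n; apply: sigma_algebra_bigcup => k.
    have [h|h] := pselect (ball n k `<=` U).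
      have -> : [set y | ball n k y /\ ball n k `<=` U] = ball n k.
        by apply/seteqP; split => [y []//|y b]; split.
      by apply: sub_sigma_algebra; exists [:: (n, k)] => //=; rewrite setIT.
    have -> : [set y | ball n k y /\ ball n k `<=` U] = set0.
      by apply/seteqP; split => [y [] _ //|].
    exact: sigma_algebra0.
  apply: smallest_sub; first exact: sigma_algebra_measurable.
  by move=> _ [l _ <-]; exact: mGs.
move=> B mB.
apply: (measure_unique (range Gs) (fun _ => setT)) => //.
- by move=> _ _ [l1 _ <-] [l2 _ <-]; exists (l1 ++ l2) => //; rewrite /Gs GsD_cat.
- by move=> _; exists [::].
- by apply/seteqP; split => // y _; exists 0%N.
- by move=> _ [l _ <-]; exact: hG.
- by move=> k /=; rewrite (@probability_setT _ _ _ (p : probability Y R)) ltry.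
Qed.

Section cond.
Context (R : realType) {dY dO : measure_display} (Y : measurableType dY)
  (Omega : measurableType dO) (Pr : probability Omega R).

Lemma probs_ge0 (p : probs Y R) B : 0 <= p B.
Proof. exact: (@measure_ge0 _ _ _ (p : probability Y R)). Qed.

Lemma probs_le1 (p : probs Y R) B : measurable B -> p B <= 1.
Proof. exact: (@probability_le1 _ _ _ (p : probability Y R)). Qed.

Lemma probs_setT (p : probs Y R) : p setT = 1.
Proof. exact: (@probability_setT _ _ _ (p : probability Y R)). Qed.

Lemma integrable01 (A : set Omega) (f : Omega -> \bar R) : measurable A ->
  measurable_fun A f -> (forall w, 0 <= f w <= 1) -> Pr.-integrable A f.
Proof.
move=> mA mf f01; apply/integrableP; split => //.
apply: (@le_lt_trans _ _ (\int[Pr]_(x in A) (cst 1 x))).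
  apply: ge0_le_integral => //.
  - exact: measurableT_comp.
  - by move=> x _; have /andP[f0 f1] := f01 x; rewrite gee0_abs.
rewrite integral_cst// mul1e.
exact: (le_lt_trans (probability_le1 Pr mA)) (ltry _).
Qed.

Lemma cond_law_lt (F1 : set_system Omega) (hF : sigma_algebra setT F1)
  (F1m : F1 `<=` measurable) (Yv : Omega -> Y) (k1 k2 : Omega -> probs Y R) :
  cond_law Pr F1 Yv k1 -> cond_law Pr F1 Yv k2 ->
  forall B, measurable B -> Pr.-negligible [set w | k1 w B < k2 w B].
Proof.
move=> [mk1 h1] [mk2 h2] B mB.
pose f w := k1 w B; pose g w := k2 w B.
have mfF (k : Omega -> probs Y R) : F_measurable F1 k ->
    measurable_fun (setT : set (g_sigma_algebraType F1)) (fun w => k w B).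
  move=> mk _ D mD; apply: sub_sigma_algebra.
  exact: (mk _ (measurable_eval mB measurableT mD)).
have mfO (k : Omega -> probs Y R) : F_measurable F1 k ->
    measurable_fun setT (fun w => k w B).
  move=> mk _ D mD; apply: F1m.
  exact: (mk _ (measurable_eval mB measurableT mD)).
have FA : F1 (setT `&` [set w | f w < g w]).
  rewrite -(sigma_algebra_id hF).
  exact: (@measurable_lte _ (g_sigma_algebraType F1) R setT measurableT f g (mfF _ mk1) (mfF _ mk2)).
set A := setT `&` [set w | f w < g w] in FA.
have mA : measurable A by exact: F1m.
have ef : \int[Pr]_(w in A) f w = \int[Pr]_(w in A) g w.
  by rewrite /f /g -h1// -h2.
have f01 (k : Omega -> probs Y R) w : 0 <= k w B <= 1.
  by rewrite probs_ge0 probs_le1.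
have if1 : Pr.-integrable A f.
  by apply: (integrable01 mA (measurable_funTS (mfO _ mk1))) => w; exact: f01.
have if2 : Pr.-integrable A g.
  by apply: (integrable01 mA (measurable_funTS (mfO _ mk2))) => w; exact: f01.
have mh : measurable_fun A (g \- f).
  by apply: emeasurable_funB; exact: (measurable_funTS (mfO _ _)).
have i0 : \int[Pr]_(w in A) `|(g \- f) w| = 0.
  transitivity (\int[Pr]_(w in A) (g \- f) w).
    apply: eq_integral => w; rewrite inE => -[_ /= fg].
    by rewrite gee0_abs// ltW// sube_gt0.
  by rewrite integralB// ef subee//; exact: integrable_fin_num.
have [N [mN PN0 sub]] := (ae_eq_integral_abs Pr mA mh).1 i0.
exists N; split => // w /= fg; apply: sub => /= /(_ (conj I fg)) /eqP.
by rewrite gt_eqF// sube_gt0.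
Qed.

End cond.

Section uniq.
Context (R : realType) {dX dY dO : measure_display} (X : measurableType dX)
  (Y : measurableType dY)
  (Omega : measurableType dO) (Pr : probability Omega R).

Lemma cond_law_unique (hY : polish_borel R Y) (F1 : set_system Omega)
  (hF : sigma_algebra setT F1)
  (F1m : F1 `<=` measurable) (Yv : Omega -> Y) (k1 k2 : Omega -> probs Y R) :
  cond_law Pr F1 Yv k1 -> cond_law Pr F1 Yv k2 ->
  exists N, Pr.-negligible N /\ forall w, ~ N w -> peq (k1 w) (k2 w).
Proof.
move=> c1 c2; have [G [mG hG]] := polish_gen hY.
exists (\bigcup_n ([set w | k1 w (G n) < k2 w (G n)] `|`
                   [set w | k2 w (G n) < k1 w (G n)])); split.
  apply: negligible_bigcup => n; apply: negligibleU.
    exact: (cond_law_lt hF F1m c1 c2).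
  exact: (cond_law_lt hF F1m c2 c1).
move=> w Nw; apply: hG => n; apply/eqP; rewrite eq_le !leNgt; apply/andP; split;
  apply/negP => h; apply: Nw; exists n => //; [right|left]; exact: h.
Qed.

Lemma integral_cond (hY : polish_borel R Y) (F1 : set_system Omega)
  (hF : sigma_algebra setT F1)
  (F1m : F1 `<=` measurable) (Yv : Omega -> Y) (Xv : Omega -> X)
  (mX : measurable_fun setT Xv) (k1 k2 : Omega -> probs Y R) :
  cond_law Pr F1 Yv k1 -> cond_law Pr F1 Yv k2 ->
  forall F : X * probs Y R -> \bar R, measurable_fun setT F ->
  \int[Pr]_w F (Xv w, k1 w) = \int[Pr]_w F (Xv w, k2 w).
Proof.
move=> c1 c2 F mF.
have mk (k : Omega -> probs Y R) : F_measurable F1 k -> measurable_fun setT k.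
  by move=> h _ B mB; rewrite setTI; apply: F1m; exact: h.
have [N [nN hN]] := cond_law_unique hY hF F1m c1 c2.
apply: ae_eq_integral => //.
- apply: measurableT_comp => //; apply/measurable_fun_pairP; split => //.
  exact: mk c1.1.
- apply: measurableT_comp => //; apply/measurable_fun_pairP; split => //.
  exact: mk c2.1.
- apply: negligibleS nN => w /= h; apply: contrapT => Nw; apply: h => _.
  exact: F_peq mF _ _ _ (hN w Nw).
Qed.

End uniq.

Lemma int_push {d1 d2} (T1 : measurableType d1) (T2 : measurableType d2)
  (R : realType) (m : measure T1 R) (phi : T1 -> T2)
  (mphi : measurable_fun setT phi) (f : T2 -> \bar R) :
  measurable_fun setT f ->
  \int[pushforward m phi]_z f z = \int[m]_w f (phi w).
Proof.
move=> mf; rewrite [LHS]integralE [RHS]integralE; congr (_ - _).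
  rewrite ge0_integral_pushforward//; [|exact: measurable_funepos].
  by rewrite preimage_setT; apply: eq_integral => x _; rewrite /= !funeposE ?funenegE.
rewrite ge0_integral_pushforward//; [|exact: measurable_funeneg].
by rewrite preimage_setT; apply: eq_integral => x _; rewrite /= !funenegE.
Qed.

Lemma indicXT (T1 T2 : Type) (R : realType) (A : set T1) (x : T1) (y : T2) :
  (\1_(A `*` [set: T2]) (x, y) = \1_A x :> R)%R.
Proof.
rewrite /indic; congr (_%:R)%R.
by rewrite in_setX /= in_setT ?andbT.
Qed.

Lemma indicTX (T1 T2 : Type) (R : realType) (B : set T2) (x : T1) (y : T2) :
  (\1_([set: T1] `*` B) (x, y) = \1_B y :> R)%R.
Proof.
rewrite /indic; congr (_%:R)%R.
by rewrite in_setX /= in_setT.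
Qed.

Lemma probsM_setT (R : realType) {dY : measure_display} (Y : measurableType dY)
  (p : probs Y R) : ((p : probability Y R) : measure Y R) setT = 1.
Proof. exact: probs_setT. Qed.

Lemma probM_setT (R : realType) {d : measure_display} (T : measurableType d)
  (p : probability T R) : (p : measure T R) setT = 1.
Proof. exact: probability_setT. Qed.

Section part1.
Context (R : realType) {dX dY dO : measure_display} (X : measurableType dX)
  (Y : measurableType dY)
  (Omega : measurableType dO) (Pr : probability Omega R)
  (mu : probability X R) (nu : probability Y R).

Lemma part1_dist (Xv : Omega -> X) (k0 : Omega -> probs Y R)
  (mX : measurable_fun setT Xv) (mk : measurable_fun setT k0)
  (hX : has_law Pr Xv mu)
  (hk : forall B, measurable B -> \int[Pr]_w k0 w B = nu B) :
  exists P : probability (X * probs Y R)%type R, Lambda mu nu P /\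
    forall F, measurable_fun setT F ->
      \int[Pr]_w F (Xv w, k0 w) = \int[P]_z F z.
Proof.
pose phi w := (Xv w, k0 w).
have mphi : measurable_fun setT phi by apply/measurable_fun_pairP.
pose phiM : {mfun Omega >-> (X * probs Y R)%type} :=
  HB.pack phi (isMeasurableFun.Build _ _ _ _ _ mphi).
exists (distribution Pr phiM); split; last first.
  by move=> F mF; rewrite /distribution int_push.
split.
  move=> A mA; rewrite /intensity.
  transitivity (\int[distribution Pr phiM]_z (\1_(A `*` [set: probs Y R]) z)%:E).
    apply: eq_integral => z _.
    rewrite (eq_integral (fun _ => (\1_A z.1)%:E)); last first.
      by move=> y _; rewrite indicXT.
    rewrite integral_cst//.
    rewrite probsM_setT.
    by rewrite mule1; case: z => x p; rewrite indicXT.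
  rewrite integral_indic//; last exact: measurableX.
  rewrite setIT /distribution /pushforward -hX//; congr (Pr _).
  by apply/seteqP; split => w //= [].
move=> B mB; rewrite /intensity.
transitivity (\int[distribution Pr phiM]_z (z.2 B)).
  apply: eq_integral => z _.
  rewrite (eq_integral (fun y => (\1_B y)%:E)); last first.
    by move=> y _; rewrite indicTX.
  by rewrite integral_indic// setIT.
rewrite /distribution int_push//; first exact: hk.
exact: (measurableT_comp (measurable_eval mB) measurable_snd).
Qed.

End part1.

Lemma part1 (R : realType) (dX dY : measure_display)
  (X : measurableType dX) (Y : measurableType dY)
  (hY : polish_borel R Y)
  (mu : probability X R) (nu : probability Y R) :
  (forall (dO : measure_display) (Omega : measurableType dO)
      (Pr : probability Omega R) (F1 F2 : set_system Omega)
      (Xv : Omega -> X) (Yv : Omega -> Y),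
    filtration2 F1 F2 -> F_measurable F1 Xv -> F_measurable F2 Yv ->
    has_law Pr Xv mu -> has_law Pr Yv nu ->
    exists P : probability (X * probs Y R)%type R,
      Lambda mu nu P /\
      forall kappa : Omega -> probs Y R, cond_law Pr F1 Yv kappa ->
      forall F : X * probs Y R -> \bar R, measurable_fun [set: X * probs Y R] F ->
        integral_well_defined Pr (fun w => F (Xv w, kappa w)) ->
        \int[Pr]_w F (Xv w, kappa w) = \int[P]_z F z).
Proof.
move=> dO Omega Pr F1 F2 Xv Yv [hF1 hF2 F12 F2m] mXv mYv hX hYl.
have F1m : F1 `<=` measurable by move=> A /F12 /F2m.
have mk (dT : measure_display) (TT : measurableType dT) (f : Omega -> TT) :
    F_measurable F1 f -> measurable_fun setT f.
  by move=> h _ B mB; rewrite setTI; apply: F1m; exact: h.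
have mX := mk _ _ _ mXv.
have [[k0 hk0]|nok] := pselect (exists k, cond_law Pr F1 Yv k).
  have hk B : measurable B -> \int[Pr]_w k0 w B = nu B.
    move=> mB; rewrite -hYl// -[Yv @^-1` B]setTI.
    have F1T : F1 setT by case: hF1 => h0 hC _; rewrite -(setD0 setT); exact: hC.
    by rewrite hk0.2.
  have [P [HP HF]] := part1_dist mX (mk _ _ _ hk0.1) hX hk.
  exists P; split => // k hk1 F mF _.
  rewrite -HF //; exact: (integral_cond hY hF1 F1m mX hk1 hk0 mF).
have hk B : measurable B -> \int[Pr]_w (cst nu w) B = nu B.
  by move=> mB; rewrite integral_cst// probM_setT mule1.
have [P [HP HF]] := part1_dist mX (measurable_cst (nu : probs Y R)) hX hk.
by exists P; split => // k hk1; exfalso; apply: nok; exists k.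
Qed.

Section sndk.
Context (R : realType) {dX dY : measure_display}
  (X : measurableType dX) (Y : measurableType dY).

Definition sndk (z : X * probs Y R) : measure Y R := (z.2 : probability Y R).

Lemma measurable_sndk U : measurable U -> measurable_fun setT (sndk ^~ U).
Proof. move=> mU; exact: (measurableT_comp (measurable_eval mU) measurable_snd). Qed.

HB.instance Definition _ := isKernel.Build _ _ _ _ R sndk measurable_sndk.

Lemma sndk_prob z : sndk z setT = 1.
Proof. exact: probs_setT. Qed.

HB.instance Definition _ := Kernel_isProbability.Build _ _ _ _ R sndk sndk_prob.

Lemma measurable_sndk_xsection (C : set ((X * probs Y R) * Y)) : measurable C ->
  measurable_fun setT (fun z => sndk z (xsection C z)).
Proof.
move=> mC; apply: (measurable_fun_xsection_finite_kernel sndk).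
by rewrite inE.
Qed.

Variable P : probability (X * probs Y R)%type R.

Definition mPr (C : set ((X * probs Y R) * Y)) : \bar R :=
  \int[P]_z sndk z (xsection C z).

Let mPr0 : mPr set0 = 0.
Proof.
by rewrite /mPr (eq_integral (cst 0)) ?integral0// => z _; rewrite xsection0 measure0.
Qed.

Let mPr_ge0 C : 0 <= mPr C.
Proof. by apply: integral_ge0 => z _. Qed.

Let mPr_sigma_additive : semi_sigma_additive mPr.
Proof.
move=> U mU tU mUU; rewrite [X in _ --> X](_ : _ =
  \int[P]_z (\sum_(n <oo) sndk z (xsection (U n) z))); last first.
  apply: eq_integral => z _; rewrite /= xsection_bigcup.
  apply/esym/cvg_lim => //; apply: measure_semi_sigma_additive.
  - by move=> n; exact: measurable_xsection.
  - exact: trivIset_xsection.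
  - by rewrite -xsection_bigcup; exact: measurable_xsection.
apply/cvg_closeP; split.
  by apply: is_cvg_nneseries => n _ _; exact: integral_ge0.
rewrite closeE// integral_nneseries// => n.
exact: measurable_sndk_xsection.
Qed.

HB.instance Definition _ := isMeasure.Build _ _ R mPr mPr0 mPr_ge0 mPr_sigma_additive.

Let mPr_setT : mPr setT = 1.
Proof.
rewrite /mPr (eq_integral (cst 1)); last first.
  move=> z _; rewrite /=.
  have -> : xsection [set: (X * probs Y R) * Y] z = [set: Y].
    by apply/seteqP; split => // y _; exact/xsectionP.
  exact: sndk_prob.
by rewrite integral_cst// mul1e probM_setT.
Qed.

HB.instance Definition _ := Measure_isProbability.Build _ _ R mPr mPr_setT.

End sndk.

Section part2.
Context (R : realType) {dX dY : measure_display}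
  (X : measurableType dX) (Y : measurableType dY).
Variable P : probability (X * probs Y R)%type R.

Lemma mPrX C D : measurable C -> measurable D ->
  mPr P (C `*` D) = \int[P]_(z in C) sndk z D.
Proof.
move=> mC mD; rewrite /mPr [RHS]integral_mkcond; apply: eq_integral => z _.
rewrite patchE; case: ifPn => zC; first by rewrite in_xsectionX.
by rewrite notin_xsectionX// measure0.
Qed.

Lemma push_fst C : measurable C -> mPr P (fst @^-1` C) = P C.
Proof.
move=> mC; have -> : fst @^-1` C = C `*` [set: Y].
  by apply/seteqP; split => [[z y]|[z y] []].
rewrite mPrX//; rewrite (eq_integral (cst 1)); last first.
  by move=> z _; exact: sndk_prob.
by rewrite integral_cst// mul1e.
Qed.

Lemma int_fst (G : X * probs Y R -> \bar R) : measurable_fun setT G ->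
  \int[mPr P]_w G w.1 = \int[P]_z G z.
Proof.
move=> mG; rewrite -(@int_push _ _ _ _ R (mPr P) fst)//.
by apply: eq_measure_integral => A mA _; rewrite /pushforward; exact: push_fst.
Qed.

Lemma intensityXT A : measurable A -> intensity P (A `*` setT) = P (A `*` setT).
Proof.
move=> mA; rewrite /intensity.
transitivity (\int[P]_z (\1_(A `*` [set: probs Y R]) z)%:E).
  apply: eq_integral => z _.
  rewrite (eq_integral (fun _ => (\1_A z.1)%:E)); last first.
    by move=> y _; rewrite indicXT.
  rewrite integral_cst// probsM_setT.
  by rewrite mule1; case: z => x p; rewrite indicXT.
by rewrite integral_indic ?setIT//; exact: measurableX.
Qed.

Lemma intensityTX B : measurable B -> intensity P (setT `*` B) = \int[P]_z sndk z B.
Proof.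
move=> mB; rewrite /intensity; apply: eq_integral => z _.
rewrite (eq_integral (fun y => (\1_B y)%:E)); last first.
  by move=> y _; rewrite indicTX.
by rewrite integral_indic// setIT.
Qed.

End part2.

Lemma part2 (R : realType) (dX dY : measure_display)
  (X : measurableType dX) (Y : measurableType dY)
  (hY : polish_borel R Y)
  (mu : probability X R) (nu : probability Y R) :
  (forall P : probability (X * probs Y R)%type R, Lambda mu nu P ->
    exists (dO : measure_display) (Omega : measurableType dO)
      (Pr : probability Omega R) (F1 F2 : set_system Omega)
      (Xv : Omega -> X) (Yv : Omega -> Y),
      [/\ filtration2 F1 F2, F_measurable F1 Xv /\ F_measurable F2 Yv,
          has_law Pr Xv mu, has_law Pr Yv nu &
          (forall kappa : Omega -> probs Y R, cond_law Pr F1 Yv kappa ->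
          forall F : X * probs Y R -> \bar R, measurable_fun [set: X * probs Y R] F ->
            integral_well_defined P F ->
            \int[Pr]_w F (Xv w, kappa w) = \int[P]_z F z)]).
Proof.
move=> P [LX LY].
pose F1 := preimage_set_system [set: (X * probs Y R) * Y] fst measurable.
have hF1 : sigma_algebra setT F1.
  rewrite /F1; apply: sigma_algebra_preimage; exact: sigma_algebra_measurable.
have F1m : F1 `<=` measurable.
  by move=> _ [C mC <-]; exact: measurable_fst.
exists _, ((X * probs Y R) * Y)%type, (mPr P : probability _ R), F1, measurable,
  (fun w => w.1.1), snd.
have mXv : F_measurable F1 (fun w : (X * probs Y R) * Y => w.1.1).
  move=> B mB; exists (B `*` [set: probs Y R]); first exact: measurableX.
  by apply/seteqP; split => [[[x p] y]|[[x p] y]] //= [] // _ [].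
have k0c : cond_law (mPr P) F1 snd (fun w : (X * probs Y R) * Y => w.1.2).
  split.
    move=> B mB; exists ([set: X] `*` B); first exact: measurableX.
    by apply/seteqP; split => [[[x p] y]|[[x p] y]] //= [] // _ [].
  move=> _ [C mC <-] B mB.
  have -> : (setT `&` fst @^-1` C) `&` snd @^-1` B = C `*` B.
    by apply/seteqP; split => [[z y]|[z y]] /= => [[[]]|[]].
  transitivity (\int[P]_(z in C) sndk z B); first exact: mPrX.
  rewrite integral_mkcond [RHS]integral_mkcond.
  pose G := (fun z : X * probs Y R => sndk z B) \_ C.
  have mG : measurable_fun setT G.
    apply/(measurable_restrictT _ mC); apply: measurable_funTS.
    exact: measurable_sndk.
  rewrite -(int_fst P mG); apply: eq_integral => w _; rewrite /G !patchE.
  have -> : (w \in [set: (X * probs Y R) * Y] `&` fst @^-1` C) = (w.1 \in C).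
    by apply/idP/idP => /set_mem; [case=> _ h|move=> h]; apply/mem_set.
  by [].
split.
- split => //; first exact: sigma_algebra_measurable.
- split => // B mB; have := @measurable_snd _ _ (X * probs Y R)%type Y measurableT B mB.
  by rewrite setTI.
- move=> A mA; rewrite -LX// intensityXT//.
  rewrite (_ : (fun w : (X * probs Y R) * Y => w.1.1) @^-1` A =
     fst @^-1` (A `*` [set: probs Y R])); last first.
    by apply/seteqP; split => [[[x p] y]|[[x p] y]] //= [].
  by apply: push_fst; exact: measurableX.
- move=> B mB; rewrite -LY// intensityTX//.
  have -> : snd @^-1` B = [set: X * probs Y R] `*` B.
    by apply/seteqP; split => [[z y]|[z y] []].
  by rewrite -(mPrX P measurableT mB).
move=> k hk F mF _.
have mX : measurable_fun setT (fun w : (X * probs Y R) * Y => w.1.1).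
  exact: (measurableT_comp measurable_fst measurable_fst).
rewrite (integral_cond hY hF1 F1m mX hk k0c mF).
rewrite -(int_fst P mF); apply: eq_integral => -[[x p] y] _ //.
Qed.

Unset Implicit Arguments.

Theorem lemma3p2 (R : realType) (dX dY : measure_display)
  (X : measurableType dX) (Y : measurableType dY)
  (hX : polish_borel R X) (hY : polish_borel R Y)
  (mu : probability X R) (nu : probability Y R) :
  (forall (dO : measure_display) (Omega : measurableType dO)
      (Pr : probability Omega R) (F1 F2 : set_system Omega)
      (Xv : Omega -> X) (Yv : Omega -> Y),
    filtration2 F1 F2 -> F_measurable F1 Xv -> F_measurable F2 Yv ->
    has_law Pr Xv mu -> has_law Pr Yv nu ->
    exists P : probability (X * probs Y R)%type R,
      Lambda mu nu P /\
      forall kappa : Omega -> probs Y R, cond_law Pr F1 Yv kappa ->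
      forall F : X * probs Y R -> \bar R, measurable_fun [set: X * probs Y R] F ->
        integral_well_defined Pr (fun w => F (Xv w, kappa w)) ->
        \int[Pr]_w F (Xv w, kappa w) = \int[P]_z F z)
  /\
  (forall P : probability (X * probs Y R)%type R, Lambda mu nu P ->
    exists (dO : measure_display) (Omega : measurableType dO)
      (Pr : probability Omega R) (F1 F2 : set_system Omega)
      (Xv : Omega -> X) (Yv : Omega -> Y),
      [/\ filtration2 F1 F2, F_measurable F1 Xv /\ F_measurable F2 Yv,
          has_law Pr Xv mu, has_law Pr Yv nu &
          (forall kappa : Omega -> probs Y R, cond_law Pr F1 Yv kappa ->
          forall F : X * probs Y R -> \bar R, measurable_fun [set: X * probs Y R] F ->
            integral_well_defined P F ->
            \int[Pr]_w F (Xv w, kappa w) = \int[P]_z F z)]).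
Proof.
split; [exact: part1 | exact: part2].
Qed.
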